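(* Let $\Omega>0$, $M\ge 2$, $\omega_q=-\Omega+(q-1)\frac{2\Omega}{M-1}$ for $q=1,\dots,M$. For given $0<\sigma<m_{\min}$ and integer $n\geq 2$, let $$\tau=\frac{0.49e^{-3/2}}{\Omega}\Big(\frac{\sigma}{m_{\min}}\Big)^{\frac{1}{2n-1}}.$$ Then there exist a measure $\mu=\sum_{j=1}^n a_j\delta_{y_j}$ with supports $\{-\tau,-2\tau,\dots,-n\tau\}$ and a measure $\hat\mu=\sum_{j=1}^n\hat a_j\delta_{\hat y_j}$ with supports $\{0,\tau,\dots,(n-1)\tau\}$ such that $\|[\hat\mu]-[\mu]\|_\infty<\sigma$ and either $\min_{1\le j\le n}|a_j|=m_{\min}$ or $\min_{1\le j\le n}|\hat a_j|=m_{\min}$.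
   Context: For a discrete measure $\nu=\sum_j b_j\delta_{x_j}$ on $\mathbb R$, $\mathcal F\nu(\omega)=\sum_j b_je^{ix_j\omega}$ and $[\nu]=(\mathcal F\nu(\omega_1),\dots,\mathcal F\nu(\omega_M))^T\in\mathbb C^M$. *)

(* Defs.v *)
From Stdlib Require Import Reals Lra.
Open Scope R_scope.

Definition Cpx : Type := (R * R)%type.
Definition C0 : Cpx := (0, 0).
Definition Cadd (z w : Cpx) : Cpx := (fst z + fst w, snd z + snd w).
Definition Csub (z w : Cpx) : Cpx := (fst z - fst w, snd z - snd w).
Definition Cmul (z w : Cpx) : Cpx :=
  (fst z * fst w - snd z * snd w, fst z * snd w + snd z * fst w).
Definition Cabs (z : Cpx) : R := sqrt (fst z * fst z + snd z * snd z).
Definition Cexpi (t : R) : Cpx := (cos t, sin t).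

Fixpoint Csum (f : nat -> Cpx) (n : nat) : Cpx :=
  match n with
  | O => C0
  | S k => Cadd (Csum f k) (f (S k))
  end.

(* Fourier transform of the discrete measure nu = sum_{j=1}^n a_j delta_{x_j}:
   F nu (w) = sum_j a_j e^{i x_j w} *)
Definition fourier (n : nat) (a : nat -> Cpx) (x : nat -> R) (w : R) : Cpx :=
  Csum (fun j => Cmul (a j) (Cexpi (x j * w))) n.

(* min_{1<=j<=n} |a_j|  (only meaningful for n >= 1) *)
Fixpoint minabs (a : nat -> Cpx) (n : nat) : R :=
  match n with
  | O => 0
  | S O => Cabs (a 1%nat)
  | S k => Rmin (minabs a k) (Cabs (a (S k)))
  end.

Definition omega_pt (Omega : R) (M q : nat) : R :=
  - Omega + INR (q - 1) * (2 * Omega / INR (M - 1)).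

(* || [nu1] - [nu2] ||_inf over the M sample points *)
Fixpoint sup_diff (F G : R -> Cpx) (Omega : R) (M q : nat) : R :=
  match q with
  | O => 0
  | S k => Rmax (sup_diff F G Omega M k)
                (Cabs (Csub (F (omega_pt Omega M (S k))) (G (omega_pt Omega M (S k)))))
  end.

Definition tau_def (Omega sigma mmin : R) (n : nat) : R :=
  (49 / 100) * exp (- (3 / 2)) / Omega
  * Rpower (sigma / mmin) (1 / INR (2 * n - 1)).

(* Main.v *)
Require Import Defs.
From Stdlib Require Import Reals Lra Lia.
From Coquelicot Require Import Coquelicot.
Open Scope R_scope.

Open Scope R_scope.

Lemma Cabs_eq (z : Cpx) : Cabs z = Cmod z.
Proof. unfold Cabs, Cmod. f_equal. simpl. ring. Qed.

Lemma Csub_eq (z w : Cpx) : Csub z w = Cminus z w.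
Proof. destruct z, w. unfold Csub, Cminus, Cplus, Copp. simpl. f_equal. Qed.

Lemma Cabs_real r : Cabs (r, 0) = Rabs r.
Proof. unfold Cabs. simpl. rewrite <- sqrt_Rsqr_abs. unfold Rsqr. f_equal. ring. Qed.

Lemma Cexpi_add a b : Cmult (Cexpi a) (Cexpi b) = Cexpi (a + b).
Proof. unfold Cexpi, Cmult. simpl. rewrite cos_plus, sin_plus. f_equal; ring. Qed.

Lemma Cexpi_pow k t : Cexpi (INR k * t) = Cpow (Cexpi t) k.
Proof.
  induction k.
  - simpl. unfold Cexpi. rewrite Rmult_0_l, cos_0, sin_0. reflexivity.
  - simpl Cpow. rewrite <- IHk, Cexpi_add. f_equal. rewrite S_INR. ring.
Qed.

Lemma Cmod_Cexpi t : Cmod (Cexpi t) = 1.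
Proof. unfold Cmod, Cexpi. simpl. transitivity (sqrt 1); [|apply sqrt_1]. f_equal.
  pose proof (sin2_cos2 t). unfold Rsqr in H. nra. Qed.

Fixpoint p (m k : nat) : R :=
  match m with
  | O => match k with O => 1 | _ => 0 end
  | S m' => p m' k - match k with O => 0 | S k' => p m' k' end
  end.

Lemma p_out m k : (m < k)%nat -> p m k = 0.
Proof.
  revert k; induction m; intros k hk; simpl.
  - destruct k; [lia|reflexivity].
  - destruct k; [lia|]. rewrite !IHm by lia. ring.
Qed.

Lemma p_top m : p m m = (-1)^m.
Proof.
  induction m; simpl; [reflexivity|]. rewrite p_out by lia. rewrite IHm. ring.
Qed.

Lemma p_sign m k : (k <= m)%nat -> 1 <= (-1)^k * p m k.
Proof.
  revert k; induction m; intros k hk.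
  - assert (k = 0%nat) by lia; subst. simpl. lra.
  - destruct k.
    + simpl. specialize (IHm 0%nat ltac:(lia)). simpl in IHm. lra.
    + simpl p. simpl pow.
      assert (h2 := IHm k ltac:(lia)).
      destruct (Nat.le_gt_cases (S k) m) as [h|h].
      * assert (h1 := IHm (S k) h). simpl pow in h1. nra.
      * rewrite (p_out m (S k)) by lia. nra.
Qed.

Lemma p_abs m k : (k <= m)%nat -> 1 <= Rabs (p m k).
Proof.
  intro h. pose proof (p_sign m k h).
  assert (Rabs ((-1)^k * p m k) = Rabs (p m k)) as <- by (rewrite Rabs_mult, pow_1_abs; ring).
  eapply Rle_trans; [exact H | apply Rle_abs].
Qed.

Lemma p_top_abs m : Rabs (p m m) = 1.
Proof. rewrite p_top. apply pow_1_abs. Qed.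

Open Scope R_scope.

Definition CS (f : nat -> Complex.C) n : Complex.C := Csum f n.

Fixpoint S0 (f : nat -> Complex.C) (N : nat) : Complex.C :=
  match N with O => f O | S N' => Cplus (S0 f N') (f (S N')) end.

Lemma CS_S f n : CS f (S n) = Cplus (CS f n) (f (S n)).
Proof. reflexivity. Qed.
Lemma CS_0 f : CS f 0 = RtoC 0.
Proof. reflexivity. Qed.

Open Scope C_scope.

Lemma CS_ext f g n : (forall j, (1 <= j <= n)%nat -> f j = g j) -> CS f n = CS g n.
Proof.
  induction n; intro h; [reflexivity|]. rewrite !CS_S. f_equal.
  - apply IHn. intros; apply h; lia.
  - apply h; lia.
Qed.

Lemma CS_shift f n : CS f (S n) = f 1%nat + CS (fun j => f (S j)) n.
Proof.
  induction n.
  - rewrite CS_S, (CS_0 f), (CS_0 (fun j => f (S j))). ring.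
  - rewrite CS_S, IHn, (CS_S (fun j => f (S j))). ring.
Qed.

Lemma CS_mulr f n c : CS f n * c = CS (fun j => f j * c) n.
Proof. induction n; [rewrite (CS_0 f), (CS_0 (fun j => f j * c)); ring|]. rewrite !CS_S, <- IHn. ring. Qed.

Lemma CS_opp f n : CS (fun j => - f j) n = - CS f n.
Proof. induction n; [rewrite (CS_0 f), (CS_0 (fun j => - f j)); ring|]. rewrite !CS_S, IHn. ring. Qed.

Lemma S0_split g a q : S0 g (a + q) = S0 g a + CS (fun j => g (a + j)%nat) q.
Proof.
  induction q.
  - rewrite Nat.add_0_r, (CS_0 (fun j => g (a + j)%nat)). ring.
  - rewrite Nat.add_succ_r. simpl S0. rewrite IHq, CS_S, Nat.add_succ_r. ring.
Qed.

Lemma S0_rev g n : CS (fun j => g (S n - j)%nat) (S n) = S0 g n.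
Proof.
  induction n.
  - rewrite CS_S, (CS_0 (fun j => g (1 - j)%nat)). simpl. ring.
  - rewrite CS_shift. simpl S0. rewrite <- IHn.
    replace (S (S n) - 1)%nat with (S n) by lia.
    rewrite (CS_ext (fun j => g (S (S n) - S j)%nat) (fun j => g (S n - j)%nat)).
    + ring.
    + intros; f_equal; lia.
Qed.

Lemma S0_ext f g N : (forall k, (k <= N)%nat -> f k = g k) -> S0 f N = S0 g N.
Proof.
  induction N; intro h; simpl; [apply h; lia|]. f_equal.
  - apply IHN. intros; apply h; lia.
  - apply h; lia.
Qed.

Lemma S0_scal c f N : S0 (fun k => c * f k) N = c * S0 f N.
Proof. induction N; simpl; [reflexivity|]. rewrite IHN. ring. Qed.

Definition Q (w : Complex.C) m N := S0 (fun k => RtoC (p m k) * Cpow w k) N.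

Lemma Q_stable w m N : (m <= N)%nat -> Q w m (S N) = Q w m N.
Proof. intro h. unfold Q. simpl S0. rewrite p_out by lia. ring. Qed.

Lemma Q_rec w m N : Q w (S m) (S N) = Q w m (S N) - w * Q w m N.
Proof.
  unfold Q. induction N.
  - simpl S0. simpl p. rewrite !RtoC_minus. simpl Cpow. ring.
  - simpl S0 in *. rewrite IHN. simpl p. rewrite RtoC_minus. simpl Cpow. ring.
Qed.

Lemma Q_mm w m : Q w m m = Cpow (1 - w) m.
Proof.
  induction m.
  - unfold Q. simpl. ring.
  - rewrite Q_rec, Q_stable, IHm by lia. simpl Cpow. ring.
Qed.

Open Scope R_scope.

Lemma cos_lb t : -2 <= t <= 2 -> 1 - t^2/2 <= cos t.
Proof.
  intro h. pose proof (pre_cos_bound t 0 ltac:(lra) ltac:(lra)) as [H _].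
  unfold cos_approx, cos_term in H. simpl in H. lra.
Qed.

Lemma one_minus_expi t : -2 <= t <= 2 -> Cmod (Cminus (RtoC 1) (Cexpi t)) <= Rabs t.
Proof.
  intro h. rewrite <- sqrt_Rsqr_abs. unfold Cmod. apply sqrt_le_1_alt.
  unfold Cexpi, Cminus, Cplus, Copp, RtoC. simpl.
  pose proof (sin2_cos2 t). pose proof (cos_lb t h). unfold Rsqr in *. simpl in *. nra.
Qed.

Lemma minabs_ge a n L : (1 <= n)%nat -> (forall j, (1 <= j <= n)%nat -> L <= Cabs (a j)) -> L <= minabs a n.
Proof.
  induction n; intros hn h; [lia|].
  destruct n; simpl; [apply h; lia|].
  apply Rmin_glb; [apply IHn; [lia| intros; apply h; lia] | apply h; lia].
Qed.

Lemma minabs_le a n : (1 <= n)%nat -> minabs a n <= Cabs (a n).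
Proof.
  intros hn. destruct n; [lia|]. destruct n; simpl; [lra|]. apply Rmin_r.
Qed.

Lemma sup_diff_lt F G Om M s q : 0 < s -> (q <= M)%nat ->
  (forall k, (1 <= k <= M)%nat -> Cabs (Csub (F (omega_pt Om M k)) (G (omega_pt Om M k))) < s) ->
  sup_diff F G Om M q < s.
Proof.
  intros hs; induction q; intros hq h; simpl; [lra|].
  apply Rmax_lub_lt; [apply IHq; auto; lia| apply h; lia].
Qed.

Lemma omega_bound Om M q : 0 < Om -> (2 <= M)%nat -> (1 <= q <= M)%nat -> Rabs (omega_pt Om M q) <= Om.
Proof.
  intros ho hM hq. unfold omega_pt.
  assert (hd : 0 < INR (M - 1)) by (apply lt_0_INR; lia).
  assert (ht0 : 0 <= INR (q - 1)) by apply pos_INR.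
  assert (ht1 : INR (q - 1) <= INR (M - 1)) by (apply le_INR; lia).
  set (d := INR (M-1)) in *. set (t := INR (q-1)) in *.
  assert (e : t * (2 * Om / d) = 2 * Om * (t / d)) by (field; lra).
  assert (0 <= t / d <= 1).
  { split; [apply Rdiv_le_0_compat; lra|]. unfold Rdiv. apply (Rmult_le_reg_r d); [lra|]. rewrite Rmult_assoc, Rinv_l, Rmult_1_r; lra. }
  rewrite e. set (u := t / d) in *. apply Rabs_le. split; nra.
Qed.

Open Scope R_scope.

Definition ahatf mm m n j : Cpx := (mm * p m (n + j - 1), 0).
Definition af mm m n j : Cpx := (- (mm * p m (n - j)), 0).

Open Scope C_scope.

Lemma key n tau om mm : (1 <= n)%nat ->
  Cmult (Csub (fourier n (ahatf mm (2*n-1) n) (fun j => (INR (j-1) * tau)%R) om)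
              (fourier n (af mm (2*n-1) n) (fun j => (- (INR j * tau))%R) om))
        (Cexpi (INR n * (tau*om))%R)
  = RtoC mm * Cpow (1 - Cexpi (tau*om)%R) (2*n-1).
Proof.
  intro hn. set (m := (2*n-1)%nat). set (th := (tau*om)%R).
  set (g := fun k => RtoC mm * (RtoC (p m k) * Cexpi (INR k * th))).
  assert (HR : RtoC mm * Cpow (1 - Cexpi th) m = S0 g m).
  { unfold g. rewrite S0_scal, <- Q_mm. unfold Q. f_equal. apply S0_ext.
    intros k _. rewrite Cexpi_pow. reflexivity. }
  rewrite HR. clear HR.
  unfold fourier. rewrite Csub_eq.
  change (Csum ?f n) with (CS f n).
  assert (E : forall A B E : Complex.C, (A - B) * E = A * E - B * E) by (intros; ring).
  rewrite E, !CS_mulr. clear E.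
  rewrite (CS_ext _ (fun j => g (n - 1 + j)%nat)).
  2:{ intros j hj. unfold g, ahatf.
      change ((mm * p m (n + j - 1))%R, 0%R) with (RtoC (mm * p m (n + j - 1))).
      rewrite <- Cmult_assoc, Cexpi_add, RtoC_mult.
      replace (n - 1 + j)%nat with (n + j - 1)%nat by lia.
      replace (INR (j - 1) * tau * om + INR n * th)%R with (INR (n + j - 1) * th)%R.
      - ring.
      - unfold th. replace (n + j - 1)%nat with ((j - 1) + n)%nat by lia.
        rewrite plus_INR. ring. }
  set (A := CS (fun j => g (n - 1 + j)%nat) n).
  rewrite (CS_ext _ (fun j => - g (n - j)%nat)).
  2:{ intros j hj. unfold g, af.
      change ((- (mm * p m (n - j)))%R, 0%R) with (RtoC (- (mm * p m (n - j)))).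
      rewrite <- Cmult_assoc, Cexpi_add, RtoC_opp, RtoC_mult.
      replace (- (INR j * tau) * om + INR n * th)%R with (INR (n - j) * th)%R.
      - ring.
      - unfold th. rewrite minus_INR by lia. ring. }
  rewrite CS_opp.
  destruct n as [|n']; [lia|].
  rewrite S0_rev.
  replace m with (S n' - 1 + S n')%nat by (unfold m; lia).
  unfold A. rewrite S0_split. replace (S n' - 1)%nat with n' by lia. ring.
Qed.

Open Scope R_scope.

Theorem proposition2p2 (Omega sigma mmin : R) (M n : nat)
  (hOmega : 0 < Omega) (hM : (2 <= M)%nat)
  (hsigma : 0 < sigma) (hsm : sigma < mmin) (hn : (2 <= n)%nat) :
  let tau := tau_def Omega sigma mmin n in
  exists (a ahat : nat -> Cpx),
    (forall j, (1 <= j <= n)%nat -> a j <> C0) /\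
    (forall j, (1 <= j <= n)%nat -> ahat j <> C0) /\
    sup_diff (fourier n ahat (fun j => INR (j - 1) * tau))
             (fourier n a (fun j => - (INR j * tau))) Omega M M < sigma /\
    (minabs a n = mmin \/ minabs ahat n = mmin).
Proof.
  intro tau.
  set (m := (2*n-1)%nat).
  assert (hm0 : 0 < mmin) by lra.
  exists (af mmin m n), (ahatf mmin m n).
  split; [|split; [|split]].
  - intros j hj H. unfold af, C0 in H. injection H as H.
    assert (h1 := p_abs m (n - j) ltac:(unfold m; lia)).
    assert (p m (n - j) = 0) by (apply (Rmult_eq_reg_l mmin); lra).
    rewrite H0, Rabs_R0 in h1. lra.
  - intros j hj H. unfold ahatf, C0 in H. injection H as H.
    assert (h1 := p_abs m (n + j - 1) ltac:(unfold m; lia)).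
    assert (p m (n + j - 1) = 0) by (apply (Rmult_eq_reg_l mmin); lra).
    rewrite H0, Rabs_R0 in h1. lra.
  - set (c := 49 / 100 * exp (- (3 / 2))).
    set (Rp := Rpower (sigma / mmin) (1 / INR (2 * n - 1))).
    assert (hc0 : 0 < c) by (unfold c; pose proof (exp_pos (-(3/2))); lra).
    assert (hc1 : c < 1).
    { unfold c. assert (exp (-(3/2)) < 1) by (rewrite <- exp_0; apply exp_increasing; lra). lra. }
    assert (hRp0 : 0 < Rp) by (unfold Rp, Rpower; apply exp_pos).
    assert (hsm0 : 0 < sigma / mmin) by (apply Rdiv_lt_0_compat; lra).
    assert (hsm1 : sigma / mmin < 1).
    { apply (Rmult_lt_reg_r mmin); [lra|]. unfold Rdiv. rewrite Rmult_assoc, Rinv_l, Rmult_1_r; lra. }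
    assert (hINR : 0 < INR m) by (apply lt_0_INR; unfold m; lia).
    assert (hRpm : Rp ^ m = sigma / mmin).
    { rewrite <- Rpower_pow by exact hRp0. unfold Rp. rewrite Rpower_mult.
      fold m. replace (1 / INR m * INR m) with 1 by (field; lra). apply Rpower_1; lra. }
    assert (hRp1 : Rp <= 1).
    { destruct (Rle_or_lt Rp 1) as [h|h]; auto.
      pose proof (Rlt_pow_R1 Rp m h ltac:(unfold m; lia)). lra. }
    assert (htau : tau * Omega = c * Rp). { unfold tau, tau_def. fold c Rp. field. apply Rgt_not_eq. exact hOmega. }
    assert (htau0 : 0 < tau) by (apply (Rmult_lt_reg_r Omega); [lra|]; rewrite htau, Rmult_0_l; apply Rmult_lt_0_compat; lra).
    apply sup_diff_lt; [lra|lia|].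
    intros k hk.
    assert (hom := omega_bound Omega M k hOmega hM hk).
    set (om := omega_pt Omega M k) in *.
    rewrite Cabs_eq.
    assert (HE : forall X : Complex.C, Cmod X = Cmod (Cmult X (Cexpi (INR n * (tau * om))))).
    { intro X. rewrite Cmod_mult, Cmod_Cexpi. ring. }
    rewrite HE. unfold m in *. rewrite key by lia.
    rewrite Cmod_mult, Cmod_pow, Cmod_R, Rabs_pos_eq by lra.
    assert (hth : Rabs (tau * om) <= c * Rp).
    { rewrite Rabs_mult, Rabs_pos_eq by lra. rewrite <- htau.
      apply Rmult_le_compat_l; lra. }
    assert (hth2 : -2 <= tau * om <= 2).
    { apply Rabs_le_between. nra. }
    assert (h1 := one_minus_expi (tau * om) hth2).
    assert (h2 : Cmod (Cminus (RtoC 1) (Cexpi (tau * om))) ^ (2*n-1) <= (c * Rp) ^ (2*n-1)).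
    { apply pow_incr. split; [apply Cmod_ge_0| lra]. }
    rewrite Rpow_mult_distr, hRpm in h2.
    assert (h3 : c ^ (2*n-1) < 1) by (apply pow_lt_1_compat; [lra|lia]).
    assert (h4 : 0 <= c ^ (2*n-1)) by (apply pow_le; lra).
    apply Rle_lt_trans with (mmin * (c ^ (2 * n - 1) * (sigma / mmin))).
    + apply Rmult_le_compat_l; lra.
    + replace (mmin * (c ^ (2 * n - 1) * (sigma / mmin))) with (c ^ (2*n-1) * sigma) by (field; lra).
      nra.
  - right. apply Rle_antisym.
    + eapply Rle_trans; [apply minabs_le; lia|].
      unfold ahatf. rewrite Cabs_real, Rabs_mult, Rabs_pos_eq by lra.
      replace (n + n - 1)%nat with m by (unfold m; lia). rewrite p_top_abs. lra.
    + apply minabs_ge; [lia|]. intros j hj.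
      unfold ahatf. rewrite Cabs_real, Rabs_mult, Rabs_pos_eq by lra.
      assert (h1 := p_abs m (n + j - 1) ltac:(unfold m; lia)). nra.
Qed.
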